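(* Let $G=(V,E)$ be an undirected hypergraph in which every node has finite degree. Then $\mathsf{Hall}(G)$ equals the supremum of all $\alpha$ for which $G$ is $\alpha$-orientable, where orientations are allowed to be randomized (fractional).
   Context: For $U\subseteq V$, $E[U]\subseteq E$ is the set of edges with at least one incident node in $U$. The Hall density is $\mathsf{Hall}(G)=\inf\{|E[U]|/|U|: U\subseteq V,\ 0<|U|<\infty\}$. An orientation is a map $f:E\to V$ with $f(e)$ incident to $e$; a randomized (fractional) orientation assigns to each edge a probability distribution over its incident nodes, and the indegree of $v$ is the total (expected) amount of edges assigned to $v$. $G$ is $\alpha$-orientable if some (randomized) orientation gives every node indegree at least $\alpha$. *)

(* Defs.v *)
From HB Require Import structures.
From mathcomp Require Import all_boot all_order all_algebra finmap.
From mathcomp Require Import boolp classical_sets cardinality reals constructive_ereal ereal.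
Set Implicit Arguments. Unset Strict Implicit. Unset Printing Implicit Defensive.
Import Order.TTheory GRing.Theory Num.Theory.
Local Open Scope classical_set_scope.
Local Open Scope fset_scope.
Local Open Scope ring_scope.

(* A hypergraph: a (possibly infinite) node type V, an edge type E (multi-edges
   allowed), and for each edge its (finite) set of incident nodes [ends e]. *)

Definition inc_edges (V E : choiceType) (ends : E -> {fset V}) (v : V) : set E :=
  [set e | v \in ends e].

Definition edges_of (V E : choiceType) (ends : E -> {fset V}) (U : {fset V}) : set E :=
  [set e | exists2 v, v \in U & v \in ends e].

Definition finite_degree (V E : choiceType) (ends : E -> {fset V}) : Prop :=
  forall v : V, finite_set (inc_edges ends v).

Definition Hall (R : realType) (V E : choiceType) (ends : E -> {fset V}) : \bar R :=
  ereal_inf [set ((#|` fset_set (edges_of ends U)|%:R / #|` U|%:R : R))%:E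
            | U in [set U : {fset V} | U != fset0]].

Definition frac_orientation (R : realType) (V E : choiceType) (ends : E -> {fset V})
  (p : E -> V -> R) : Prop :=
  [/\ forall e v, 0 <= p e v,
      forall e v, v \notin ends e -> p e v = 0 &
      forall e, \sum_(v <- ends e) p e v = 1].

Definition indegree (R : realType) (V E : choiceType) (ends : E -> {fset V})
  (p : E -> V -> R) (v : V) : R :=
  \sum_(e <- fset_set (inc_edges ends v)) p e v.

Definition orientable (R : realType) (V E : choiceType) (ends : E -> {fset V})
  (alpha : R) : Prop :=
  exists p : E -> V -> R, frac_orientation ends p /\
    forall v, alpha <= indegree ends p v.

(* Main.v *)
Require Import Defs.
From HB Require Import structures.
From mathcomp Require Import all_boot all_order all_algebra finmap.
From mathcomp Require Import boolp classical_sets cardinality reals constructive_ereal ereal.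
From mathcomp Require Import topology normedtype.
From mathcomp Require Import zify ring lra.
Set Implicit Arguments. Unset Strict Implicit. Unset Printing Implicit Defensive.
Import Order.TTheory GRing.Theory Num.Theory.
Import numFieldNormedType.Exports.

Definition XT (R : realType) (I : Type) := prod_topology (fun _ : I => R).
HB.instance Definition _ (R : realType) (I : Type) := Topological.on (XT R I).
HB.instance Definition _ (R : realType) (I : Type) := isPointed.Build (XT R I) (fun _ => 0%R).

Local Open Scope fset_scope.
Lemma sumn_sub_le (T : choiceType) (A B : {fset T}) (f : T -> nat) :
  A `<=` B -> \sum_(x <- A) f x <= \sum_(x <- B) f x.
Proof.
move=> AB; rewrite (big_fsetID _ (fun x => x \in A) B) /=.
have -> : [fset x in B | x \in A] = A.
  by apply/fsetP => x; rewrite !inE; case xA: (x \in A); rewrite ?andbF ?andbT //; apply: (fsubsetP AB).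
exact: leq_addr.
Qed.

Lemma sumn_supp_le (T : choiceType) (A B : {fset T}) (f : T -> nat) :
  (forall x, x \in A -> 0 < f x -> x \in B) ->
  \sum_(x <- A) f x <= \sum_(x <- B) f x.
Proof.
move=> hAB; rewrite (big_fsetID _ (fun x => x \in B) A) /=.
set S2 := (X in (_ + X)%N).
have -> : S2 = 0.
  rewrite /S2 big1_seq // => x /andP[_]; rewrite !inE => /andP[xA xB]; apply/eqP; rewrite eqn0Ngt.
  by apply/negP => /(hAB _ xA); rewrite (negbTE xB).
rewrite addn0.
by apply: sumn_sub_le; apply/fsubsetP => x; rewrite !inE => /andP[].
Qed.

Lemma sumn_const_le (T : choiceType) (A : {fset T}) (f : T -> nat) c :
  (forall x, x \in A -> f x <= c) -> \sum_(x <- A) f x <= #|` A| * c.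
Proof.
move=> h; rewrite (@leq_trans (\sum_(x <- A) c)) //.
  by rewrite big_seq [X in _ <= X]big_seq; apply: leq_sum => x /h.
by rewrite big_const_seq count_predT iter_addn_0 mulnC.
Qed.

Lemma sumn_const (T : choiceType) (A : {fset T}) c :
  \sum_(x <- A) c = #|` A| * c.
Proof. by rewrite big_const_seq count_predT iter_addn_0 mulnC. Qed.

Lemma sumn_two_point (T : choiceType) (A : {fset T}) (h : T -> nat) w u :
  w \in A -> u \in A -> w != u -> 0 < h w ->
  \sum_(x <- A) (if x == w then (h x).-1 else if x == u then (h x).+1 else h x)
  = \sum_(x <- A) h x.
Proof.
move=> wA uA wu hw.
have uA' : u \in A `\ w by rewrite in_fsetD1 eq_sym wu.
rewrite (big_fsetD1 w wA) (big_fsetD1 u uA') /=.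
rewrite eqxx.
have uw : (u == w) = false by rewrite eq_sym (negbTE wu).
rewrite uw eqxx.
rewrite [in RHS](big_fsetD1 w wA) [in RHS](big_fsetD1 u uA') /=.
rewrite (@eq_big_seq _ _ _ _ _ _ h); last first.
  by move=> x; rewrite !in_fsetD1 => /and3P[xu xw _]; rewrite (negbTE xu) (negbTE xw).
by case: (h w) hw => // n _ /=; rewrite addSn addnS addSn.
Qed.
Section Fin.
Variables (V E : choiceType) (ends : E -> {fset V}) (U : {fset V}) (F : {fset E}) (b : nat).

Definition validg (g : E -> V -> nat) :=
  (forall e v, 0 < g e v -> [/\ e \in F, v \in ends e & v \in U]) /\
  (forall e, e \in F -> \sum_(v <- U) g e v = b).
Definition dg (g : E -> V -> nat) v := \sum_(e <- F) g e v.
Definition pot g := \sum_(v <- U) (dg g v) ^ 2.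
Definition locopt g := forall e w u, e \in F -> w \in U -> u \in U -> u \in ends e ->
  0 < g e w -> dg g w <= (dg g u).+1.
Definition upd (g : E -> V -> nat) e0 w u := fun e v =>
  if e == e0 then (if v == w then (g e v).-1 else if v == u then (g e v).+1 else g e v)
  else g e v.

Lemma upd_valid g e0 w u : validg g -> e0 \in F -> w \in U -> u \in U -> u \in ends e0 ->
  w != u -> 0 < g e0 w -> validg (upd g e0 w u).
Proof.
move=> [h1 h2] e0F wU uU ue0 wu gw; split.
- move=> e v; rewrite /upd; case: eqP => [-> | _]; last exact: h1.
  case: eqP => [-> _ | _]; first exact: h1.
  by case: eqP => [-> _ | _]; [split | exact: h1].
- move=> e eF; rewrite /upd; case: eqP => [-> | _]; last exact: h2.
  by rewrite sumn_two_point //; apply: h2.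
Qed.

Lemma dg_upd g e0 w u x : e0 \in F -> w != u -> 0 < g e0 w ->
  (dg (upd g e0 w u) x + (x == w) = dg g x + (x == u))%N.
Proof.
move=> e0F wu gw; rewrite /dg (big_fsetD1 e0 e0F) [in RHS](big_fsetD1 e0 e0F) /=.
have -> : \sum_(e <- F `\ e0) upd g e0 w u e x = \sum_(e <- F `\ e0) g e x.
  by apply: eq_big_seq => e; rewrite in_fsetD1 /upd => /andP[/negbTE -> _].
set S := \sum_(e <- F `\ e0) g e x.
rewrite /upd eqxx; case: (eqVneq x w) => [-> | xw].
  rewrite (negbTE wu) /=; case: (g e0 w) gw => // k _ /=.
  by rewrite addn0 addn1 addSn.
case: (eqVneq x u) => [-> | xu] /=.
  by rewrite addn0 addn1 addSn.
by [].
Qed.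

Lemma pot_upd g e0 w u : e0 \in F -> w \in U -> u \in U -> w != u -> 0 < g e0 w ->
  (dg g u).+1 < dg g w -> pot (upd g e0 w u) < pot g.
Proof.
move=> e0F wU uU wu gw lt.
have hw := dg_upd w e0F wu gw.
have hu := dg_upd u e0F wu gw.
rewrite eqxx (negbTE wu) addn0 in hw.
rewrite eqxx eq_sym (negbTE wu) addn0 in hu.
have uU' : u \in U `\ w by rewrite in_fsetD1 eq_sym wu.
rewrite /pot (big_fsetD1 w wU) (big_fsetD1 u uU') [in X in _ < X](big_fsetD1 w wU)
  [in X in _ < X](big_fsetD1 u uU') /=.
have -> : \sum_(i <- U `\ w `\ u) dg (upd g e0 w u) i ^ 2 = \sum_(i <- U `\ w `\ u) dg g i ^ 2.
  apply: eq_big_seq => x; rewrite !in_fsetD1 => /and3P[xu xw _].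
  by have := dg_upd x e0F wu gw; rewrite (negbTE xu) (negbTE xw) !addn0 => ->.
move: hw hu lt; set a' := dg (upd g e0 w u) w; set c' := dg (upd g e0 w u) u.
set a := dg g w; set c := dg g u; set S := \sum_(i <- _) _.
move=> ha hc lt; rewrite -ha hc in lt *.
rewrite !expnS !expn0 !muln1; nia.
Qed.

Lemma exists_locopt g0 : validg g0 -> exists g, validg g /\ locopt g.
Proof.
have [n] := ubnP (pot g0); elim: n g0 => // n IH g hp hv.
case: (pselect (exists e w u, [/\ e \in F, w \in U, u \in U, u \in ends e & 0 < g e w]
   /\ (dg g u).+1 < dg g w)) => [[e [w [u [[eF wU uU ue gw] lt]]]] | nex].
  have wu : w != u by apply/eqP => wu; by move: lt; rewrite wu => /ltnW; rewrite ltnn.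
  apply: (IH (upd g e w u)); last exact: upd_valid.
  by rewrite -ltnS (leq_trans _ hp) // ltnS pot_upd.
exists g; split => // e w u eF wU uU ue gw; rewrite leqNgt; apply/negP => lt.
by apply: nex; exists e, w, u.
Qed.

Variables (R : realType) (beta : R).
Hypothesis hall : forall T : {fset V}, (T `<=` U) -> T != fset0 ->
  (beta * (#|` T|)%:R <= (#|` [fset e in F | (ends e `&` T) != fset0]|)%:R)%R.

Lemma gap g v : validg g -> locopt g -> v \in U ->
  (b%:R * beta <= ((dg g v + #|` U|)%N)%:R)%R.
Proof.
move=> [h1 h2] hl vU; set n := #|` U|; set d := dg g v.
have [j [j0 jn hj]] : exists j, [/\ 0 < j, (j <= n)%N & forall x, x \in U -> dg g x != (d + j)%N].
  apply/not_existsP => H.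
  have : {subset iota d n.+1 <= map (dg g) U}.
    move=> i; rewrite mem_iota => /andP[di ilt].
    have [->|dni] := eqVneq i d; first exact: map_f.
    have /existsNP [x /not_implyP [xU /negP /negPn /eqP xe]] :
        ~ (forall x, x \in U -> dg g x != (d + (i - d))%N).
      move=> hx; apply: (H (i - d)%N); split => //; first by rewrite subn_gt0 ltn_neqAle eq_sym dni.
      by rewrite leq_subLR -ltnS -addnS.
    have -> : i = dg g x by rewrite xe subnKC.
    exact: map_f.
  move/(uniq_leq_size (iota_uniq d n.+1)); rewrite size_iota size_map.
  by rewrite ltnn.
set T := [fset x in U | dg g x < d + j].
have vT : v \in T by rewrite !inE vU /= -[X in X < _]addn0 ltn_add2l.
have TU : T `<=` U by apply/fsubsetP => x; rewrite !inE => /andP[].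
have T0 : T != fset0 by apply/fset0Pn; exists v.
set ET := [fset e in F | (ends e `&` T) != fset0].
have ETF : ET `<=` F by apply/fsubsetP => x; rewrite !inE => /andP[].
have key : forall e, e \in ET -> b <= \sum_(x <- T) g e x.
  move=> e; rewrite !inE => /andP[eF /fset0Pn [u]]; rewrite !inE => /andP[ue uT].
  case/andP: uT => uU uT.
  rewrite -(h2 e eF); apply: sumn_supp_le => x xU gx.
  have [_ xe _] := h1 _ _ gx.
  have := hl e x u eF xU uU ue gx => hxu.
  rewrite !inE xU /= ltn_neqAle hj // andTb.
  exact: leq_trans hxu uT.
have main : #|` ET| * b <= #|` T| * (d + n).
  rewrite -sumn_const (@leq_trans (\sum_(e <- ET) \sum_(x <- T) g e x)) //.
    by rewrite big_seq [X in _ <= X]big_seq; apply: leq_sum => e /key.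
  rewrite (@leq_trans (\sum_(e <- F) \sum_(x <- T) g e x)) //; first exact: sumn_sub_le.
  rewrite exchange_big /=; apply: sumn_const_le => x; rewrite !inE => /andP[_ xlt].
  by apply: ltnW; rewrite (leq_trans xlt) // leq_add2l.
have hT := hall TU T0.
have Tpos : (0 < (#|` T|)%:R :> R)%R by rewrite ltr0n cardfs_gt0.
rewrite -(ler_pM2r Tpos) (le_trans _ (_ : ((#|` ET| * b)%:R <= _)%R)) //.
- by rewrite natrM -mulrA [(#|` ET|%:R * _)%R]mulrC ler_wpM2l ?ler0n.
- by rewrite -natrM ler_nat (leq_trans main) // mulnC.
Qed.
End Fin.
Section Graph.
Variables (R : realType) (V E : choiceType) (ends : E -> {fset V}).
Hypothesis hne : forall e : E, ends e != fset0.
Hypothesis hdeg : finite_degree ends.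

Lemma fin_edges (U : {fset V}) : finite_set (edges_of ends U).
Proof.
have -> : edges_of ends U = (\bigcup_(v in [set` U]) inc_edges ends v)%classic.
  by apply/seteqP; split => e /=; [case=> v vU ve; exists v | case=> v /= vU ve; exists v].
by apply: bigcup_finite; [exact: finite_fset | move=> v _; exact: hdeg].
Qed.

Lemma memF (U : {fset V}) e :
  (e \in fset_set (edges_of ends U)) = (ends e `&` U != fset0).
Proof.
rewrite in_fset_set; last exact: fin_edges.
apply/idP/idP.
  by move/set_mem => [v vU ve]; apply/fset0Pn; exists v; rewrite inE ve vU.
by case/fset0Pn => v; rewrite inE => /andP[ve vU]; apply: mem_set; exists v.
Qed.

Lemma mem_inc v e : (e \in fset_set (inc_edges ends v)) = (v \in ends e).
Proof.
rewrite in_fset_set; last exact: hdeg.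
by apply/idP/idP; [move/set_mem | move=> h; apply: mem_set].
Qed.

End Graph.
Section FinOrient.
Variables (R : realType) (V E : choiceType) (ends : E -> {fset V}).
Hypothesis hne : forall e : E, ends e != fset0.
Hypothesis hdeg : finite_degree ends.
Local Open Scope ring_scope.

Lemma fin_orient (U : {fset V}) (alpha beta : R) : alpha < beta ->
  (forall T : {fset V}, T != fset0 ->
     beta * (#|` T|)%:R <= (#|` fset_set (edges_of ends T)|)%:R) ->
  exists p, frac_orientation ends p /\ forall v, v \in U -> alpha <= indegree ends p v.
Proof.
move=> ab hH.
set F := fset_set (edges_of ends U).
set n := #|` U|.
have ba0 : 0 < beta - alpha by rewrite subr_gt0.
set b := Num.Def.archi_bound (n%:R / (beta - alpha)).
have hb : n%:R / (beta - alpha) < b%:R.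
  by apply: archi_boundP; rewrite divr_ge0 // ltW.
have b0 : (0 < b)%N.
  by rewrite -(ltr0n R) (le_lt_trans _ hb) // divr_ge0 // ltW.
have [c hc] : exists c : E -> V, forall e, c e \in ends e /\ (e \in F -> c e \in U).
  have : forall e, exists v, v \in ends e /\ (e \in F -> v \in U).
    move=> e; case: (boolP (e \in F)) => eF.
      move: (eF); rewrite memF // => /fset0Pn [v]; rewrite inE => /andP[ve vU].
      by exists v.
    by move: (hne e) => /fset0Pn [v ve]; exists v; split => //; rewrite (negbTE eF).
  by move/choice => [c hc]; exists c.
set g0 := fun e v => if (e \in F) && (v == c e) then b else 0%N.
have v0 : validg ends U F b g0.
  split.
  - move=> e v; rewrite /g0; case: ifP => // /andP[eF /eqP ->] _.
    by have [h1 h2] := hc e; split => //; apply: h2.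
  - move=> e eF; have cU := (hc e).2 eF.
    rewrite (big_fsetD1 (c e) cU) /g0 eF eqxx /= big1_seq ?addn0 // => v /andP[_].
    by rewrite in_fsetD1 => /andP[/negbTE -> _].
have [g [[vg1 vg2] lg]] := exists_locopt v0.
have hall : forall T : {fset V}, (T `<=` U) -> T != fset0 ->
    beta * (#|` T|)%:R <= (#|` [fset e in F | (ends e `&` T) != fset0]|)%:R.
  move=> T TU T0; rewrite (le_trans (hH T T0)) // ler_nat; apply: fsubset_leq_card.
  apply/fsubsetP => e; rewrite memF // => eT; rewrite !inE eT andbT memF //.
  move: eT => /fset0Pn [v]; rewrite inE => /andP[ve vT]; apply/fset0Pn; exists v.
  by rewrite inE ve (fsubsetP TU).
have g0F : forall e v, e \in F -> v \notin ends e -> g e v = 0%N.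
  move=> e v eF ve; apply/eqP; rewrite eqn0Ngt; apply/negP => /vg1 [_ h _].
  by rewrite h in ve.
exists (fun e v => if e \in F then (g e v)%:R / b%:R else ((v == c e) : nat)%:R).
split; first split.
- by move=> e v; case: ifP => _; [rewrite divr_ge0 | rewrite ler0n].
- move=> e v ve; case: ifP => eF; first by rewrite g0F // mul0r.
  have : v != c e by apply: contraNneq ve => ->; exact: (hc e).1.
  by move/negbTE ->.
- move=> e; case: (boolP (e \in F)) => eF; rewrite ?eF ?(negbTE eF).
    rewrite -mulr_suml -natr_sum.
    have -> : (\sum_(v <- ends e) g e v = b)%N.
      rewrite -(vg2 e eF) -(big_fset_incl _ (fsubsetIl (ends e) U)); last first.
        move=> x xe; rewrite inE xe /= => xU; apply/eqP; rewrite eqn0Ngt.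
        by apply/negP => /vg1 [_ _ h]; rewrite h in xU.
      rewrite (big_fset_incl _ (fsubsetIr (ends e) U)) // => x xU.
      by rewrite inE xU andbT => xe; apply: g0F.
    by rewrite mulfV // pnatr_eq0 -lt0n.
  rewrite (big_fsetD1 (c e) (hc e).1) eqxx /= big1_seq ?addr0 // => v /andP[_].
  by rewrite in_fsetD1 => /andP[/negbTE -> _].
move=> v vU; rewrite /indegree.
rewrite (@eq_big_seq _ _ _ _ _ _ (fun e => (g e v)%:R / b%:R)); last first.
  move=> e; rewrite mem_inc // => ve; rewrite memF //.
  suff -> : ends e `&` U != fset0 by [].
  by apply/fset0Pn; exists v; rewrite inE ve vU.
rewrite -mulr_suml -natr_sum.
have -> : (\sum_(e <- fset_set (inc_edges ends v)) g e v = dg F g v)%N.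
  apply: big_fset_incl.
    apply/fsubsetP => e; rewrite mem_inc // => ve; rewrite memF //.
    by apply/fset0Pn; exists v; rewrite inE ve vU.
  by move=> e eF; rewrite mem_inc // => ve; apply: g0F.
have := gap hall (conj vg1 vg2) lg vU; rewrite -/n natrD.
move: hb; rewrite ltr_pdivrMr // => hb h.
rewrite ler_pdivlMr ?ltr0n //.
set B := (b%:R : R) in hb h *; set D := ((dg F g v)%:R : R) in h *.
lra.
Qed.
End FinOrient.
Section Upper.
Variables (R : realType) (V E : choiceType) (ends : E -> {fset V}).
Hypothesis hdeg : finite_degree ends.
Local Open Scope ring_scope.

Lemma sumr_cst_seq (T : Type) (s : seq T) (c : R) : \sum_(x <- s) c = c * (size s)%:R.
Proof.
elim: s => [|x s IH]; first by rewrite big_nil mulr0.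
by rewrite big_cons IH /= -addn1 natrD mulrDr mulr1 addrC.
Qed.

Lemma sumr_sub_le (T : choiceType) (A B : {fset T}) (f : T -> R) :
  A `<=` B -> (forall x, 0 <= f x) -> \sum_(x <- A) f x <= \sum_(x <- B) f x.
Proof.
move=> AB f0; rewrite (big_fsetID _ (fun x => x \in A) B) /=.
have -> : [fset x in B | x \in A] = A.
  by apply/fsetP => x; rewrite !inE; case xA: (x \in A); rewrite ?andbF ?andbT //; apply: (fsubsetP AB).
by rewrite lerDl sumr_ge0.
Qed.

Lemma orient_le (alpha : R) p (U : {fset V}) : frac_orientation ends p ->
  (forall v, alpha <= indegree ends p v) -> U != fset0 ->
  alpha <= (#|` fset_set (edges_of ends U)|)%:R / (#|` U|)%:R.
Proof.
move=> [p0 pout psum] hin U0.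
set F := fset_set (edges_of ends U).
have Upos : 0 < (#|` U|)%:R :> R by rewrite ltr0n cardfs_gt0.
rewrite ler_pdivlMr //.
have h1 : alpha * (#|` U|)%:R <= \sum_(v <- U) \sum_(e <- F) p e v.
  rewrite -sumr_cst_seq big_seq [X in _ <= X]big_seq; apply: ler_sum => v vU.
  rewrite (le_trans (hin v)) // /indegree (big_fset_incl _ (_ : _ `<=` F)) //.
    apply/fsubsetP => e; rewrite mem_inc // => ve; rewrite memF //.
    by apply/fset0Pn; exists v; rewrite inE ve vU.
  by move=> e eF; rewrite mem_inc // => ve; apply: pout.
apply: (le_trans h1); rewrite exchange_big /=.
rewrite -[X in _ <= X]mul1r -sumr_cst_seq big_seq [X in _ <= X]big_seq; apply: ler_sum => e eF.
rewrite -(psum e) -(big_fset_incl _ (fsubsetIr (ends e) U)); last first.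
  by move=> x xU; rewrite inE xU andbT => xe; apply: pout.
by apply: sumr_sub_le; [exact: fsubsetIl | move=> x; exact: p0].
Qed.
End Upper.
Section Compactness.
Variables (R : realType) (V E : choiceType) (ends : E -> {fset V}).
Hypothesis hne : forall e : E, ends e != fset0.
Hypothesis hdeg : finite_degree ends.
Local Open Scope ring_scope.

Lemma frac_le1 (p : E -> V -> R) e v : frac_orientation ends p -> p e v <= 1.
Proof.
move=> [p0 pout psum]; case: (boolP (v \in ends e)) => ve; last by rewrite pout.
rewrite -(psum e) (big_fsetD1 v ve) /= lerDl sumr_ge0 //.
Qed.

Lemma cont_sum0 (I : eqType) (s : seq I) :
  continuous (fun x : XT R I => \sum_(i <- s) x i).
Proof.
elim: s => [|i s IH].
  have -> : (fun x : XT R I => \sum_(i <- [::]) x i) = (fun _ => 0) by apply: funext => x; rewrite big_nil.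
  exact: cst_continuous.
have -> : (fun x : XT R I => \sum_(j <- i :: s) x j) = (fun x : XT R I => x i + \sum_(j <- s) x j).
  by apply: funext => x; rewrite big_cons.
move=> x; apply: (@continuousD _ _ _ (fun x : XT R I => x i) (fun x => \sum_(j <- s) x j)); last exact: IH.
exact: (@proj_continuous I (fun _ => R) i).
Qed.

Lemma cont_sum (I : eqType) (J : Type) (f : J -> I) (s : seq J) :
  continuous (fun x : XT R I => \sum_(j <- s) x (f j)).
Proof.
have -> : (fun x : XT R I => \sum_(j <- s) x (f j)) = (fun x : XT R I => \sum_(i <- map f s) x i).
  by apply: funext => x; rewrite big_map.
exact: cont_sum0.
Qed.

Lemma inf_orient (alpha beta : R) : alpha < beta ->
  (forall T : {fset V}, T != fset0 ->
     beta * (#|` T|)%:R <= (#|` fset_set (edges_of ends T)|)%:R) ->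
  orientable ends alpha.
Proof.
move=> ab hH.
case: (pselect (exists v : V, True)) => [[v0 _] | nV]; last first.
  have nV' : forall v : V, False by move=> v; apply: nV; exists v.
  exists (fun _ _ => 0); split; first split.
  - by [].
  - by [].
  - by move=> e; case/fset0Pn: (hne e) => v _; case: (nV' v).
  - by move=> v; case: (nV' v).
pose X := XT R (E * V)%type.
pose A : set X := [set x | forall i, `[0, 1]%classic (x i)]%classic.
have Acomp : compact A.
  by apply: (@tychonoff _ (fun _ => R) (fun _ => `[0, 1]%classic)) => i; exact: segment_compact.
pose K : set X := [set x | forall e, (forall v, v \notin ends e -> x (e, v) = 0) /\
   \sum_(v <- ends e) x (e, v) = 1]%classic.
pose N : V -> set X := fun v =>
  [set x | alpha <= \sum_(e <- fset_set (inc_edges ends v)) x (e, v)]%classic.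
have Kcl : closed K.
  have -> : K = (\bigcap_(e in setT) (\bigcap_(v in [set v | v \notin ends e])
      [set x : X | x (e, v) = 0] `&` [set x : X | \sum_(v <- ends e) x (e, v) = 1]))%classic.
    apply/seteqP; split => x /= h.
      by move=> e _; split; [move=> v /= ve; apply: (h e).1 | apply: (h e).2].
    by move=> e; have [h1 h2] := h e I; split => // v ve; apply: h1.
  apply: closed_bigI => e _; apply: closedI.
    apply: closed_bigI => v _.
    apply: (@preimage_closed _ _ (fun x : X => x (e, v)) [set y | y = 0]%classic).
      by move=> x _; exact: (@proj_continuous _ (fun _ => R) (e, v)).
    exact: closed_eq.
  apply: (@preimage_closed _ _ (fun x : X => \sum_(v <- ends e) x (e, v)) [set y | y = 1]%classic).
    by move=> x _; exact: (@cont_sum _ _ (fun v => (e, v)) (ends e) x).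
  exact: closed_eq.
have Ncl : forall v, closed (N v).
  move=> v; apply: (@preimage_closed _ _
      (fun x : X => \sum_(e <- fset_set (inc_edges ends v)) x (e, v)) [set y | alpha <= y]%classic).
    by move=> x _; exact: (@cont_sum _ _ (fun e => (e, v)) _ x).
  exact: closed_ge.
move: Acomp; rewrite compact_In0 => /(_ V setT (fun v => (A `&` (K `&` N v))%classic)) [].
- by exists (fun v => (K `&` N v)%classic) => // v _; apply: closedI.
- move=> D' _.
  have [p [pf pin]] := fin_orient hne hdeg D' ab hH.
  exists (fun i => p i.1 i.2) => v /= vD'; split; last split.
  + move=> [e w] /=; rewrite in_itv /=; apply/andP; split; first by case: pf.
    exact: frac_le1.
  + by move=> e; case: pf => _ h1 h2; split; [exact: h1 | exact: h2].
  + exact: pin.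
- move=> x hx; exists (fun e v => x (e, v)).
  have [hA [hK _]] := hx v0 I.
  split; first split.
  + by move=> e v; have := hA (e, v); rewrite /= in_itv /= => /andP[].
  + by move=> e v ve; apply: (hK e).1.
  + by move=> e; apply: (hK e).2.
  + by move=> v; have [_ [_ hN]] := hx v I.
Qed.

End Compactness.
Section Final.
Local Open Scope ring_scope.

Lemma ereal_dense (R : realType) (x y : \bar R) : (x < y)%E -> exists r : R, (x < r%:E)%E /\ (r%:E < y)%E.
Proof.
case: x => [a| |]; case: y => [b| |] //=.
- rewrite lte_fin => ab; exists ((a + b) / 2); rewrite !lte_fin; split; lra.
- by move=> _; exists (a + 1); rewrite lte_fin ltey; split => //; lra.
- by move=> _; exists (b - 1); rewrite lte_fin ltNye; split => //; lra.
- by move=> _; exists 0; rewrite ltey ltNye.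
Qed.

End Final.

Local Open Scope classical_set_scope.
Local Open Scope fset_scope.
Local Open Scope ring_scope.

Theorem propositionB1 (R : realType) (V E : choiceType) (ends : E -> {fset V})
  (hne : forall e : E, ends e != fset0)
  (hdeg : finite_degree ends) :
  Hall R ends = ereal_sup [set alpha%:E | alpha in [set alpha : R | orientable ends alpha]].
Proof.
set S := [set alpha%:E | alpha in [set alpha : R | orientable ends alpha]]%classic.
apply/eqP; rewrite eq_le; apply/andP; split; last first.
  apply: ge_ereal_sup => y [alpha hor <-].
  apply: le_ereal_inf_tmp => z [U U0 <-]; rewrite lee_fin.
  by have [p [pf pin]] := hor; apply: (orient_le hdeg pf pin).
rewrite leNgt; apply/negP => lt.
have [r [hr1 hr2]] := ereal_dense lt.
have [beta [hb1 hb2]] := ereal_dense hr2.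
have hor : orientable ends r.
  apply: (@inf_orient R V E ends hne hdeg r beta); first by rewrite -lte_fin.
  move=> T T0; rewrite -ler_pdivlMr ?ltr0n ?cardfs_gt0 //.
  rewrite -lee_fin (le_trans (ltW hb2)) //.
  by apply: ereal_inf_lbound; exists T.
have : (r%:E <= ereal_sup S)%E by apply: ereal_sup_ubound; exists r.
by rewrite leNgt hr1.
Qed.
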